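(* Let $V$ be a Majorana algebra generated by a set $A$ of Majorana axes, and let $a_0, a_1 \in A$ with $\tau(a_1) = 1$. Then the vector $a_0^{\sigma(a_1)}$ satisfies axioms M3–M7 (with $a_0^{\sigma(a_1)}$ in place of $a$), and $\tau(a_0^{\sigma(a_1)}) = \tau(a_0)^{\sigma(a_1)}$, where $\tau(a_0)^{\sigma(a_1)} = \sigma(a_1)^{-1}\tau(a_0)\sigma(a_1)$.
   Context: Let $V$ be a real vector space with a positive definite symmetric bilinear form $(\,,\,)$ and a bilinear commutative (non-associative) product $\cdot$ such that (M1) $(u, v\cdot w) = (u\cdot v, w)$ for all $u,v,w\in V$, and (M2) $(u\cdot u, v\cdot v)\ge (u\cdot v, u\cdot v)$ for all $u,v \in V$. For $a \in V$ and $\mu \in \mathbb{R}$ write $V_\mu^{(a)} = \{v \in V : a\cdot v = \mu v\}$. A nonzero $a\in V$ is said to satisfy axioms M3–M7 if: (M3) $(a,a)=1$ and $a\cdot a = a$; (M4) $V = V_1^{(a)}\oplus V_0^{(a)}\oplus V_{1/4}^{(a)} \oplus V_{1/32}^{(a)}$; (M5) $V_1^{(a)} = \mathbb{R}a$; (M6) the linear map $\tau(a)$ of $V$ acting as $+1$ on $V_1^{(a)}\oplus V_0^{(a)}\oplus V_{1/4}^{(a)}$ and as $-1$ on $V_{1/32}^{(a)}$ preserves the algebra product; (M7) on $V_+^{(a)} := V_1^{(a)}\oplus V_0^{(a)}\oplus V_{1/4}^{(a)}$, the linear map $\sigma(a)$ acting as $+1$ on $V_1^{(a)}\oplus V_0^{(a)}$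 and as $-1$ on $V_{1/4}^{(a)}$ preserves the restriction of the algebra product to $V_+^{(a)}$. Elements satisfying M3–M7 are called Majorana axes, and $\tau(a)$ the Majorana involution of $a$. A Majorana algebra is such a $V$ (satisfying M1, M2) that is generated as an algebra by a set $A$ of Majorana axes. Linear maps act on the right: $u^{g}$ denotes the image of $u$ under $g$. *)

(* Defs.v *)
From HB Require Import structures.
From mathcomp Require Import all_boot all_order all_algebra.
From mathcomp Require Import reals.
Set Implicit Arguments. Unset Strict Implicit. Unset Printing Implicit Defensive.
Import Order.TTheory GRing.Theory Num.Theory.
Local Open Scope ring_scope.

Section Majorana.
Variables (R : realType) (V : lmodType R).
Variables (form : V -> V -> R) (mul : V -> V -> V).

Definition form_ok : Prop :=
  [/\ (forall x y z, form (x + y) z = form x z + form y z),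
      (forall (k : R) x z, form (k *: x) z = k * form x z),
      (forall x y, form x y = form y x) &
      (forall x, x != 0 -> 0 < form x x)].

Definition mul_ok : Prop :=
  [/\ (forall x y z, mul (x + y) z = mul x z + mul y z),
      (forall (k : R) x z, mul (k *: x) z = k *: mul x z) &
      (forall x y, mul x y = mul y x)].

Definition M1 : Prop := forall u v w, form u (mul v w) = form (mul u v) w.
Definition M2 : Prop :=
  forall u v, form (mul u u) (mul v v) >= form (mul u v) (mul u v).

Definition eig (a : V) (mu : R) (v : V) : Prop := mul a v = mu *: v.

Definition Vplus (a v : V) : Prop :=
  exists x y z, [/\ eig a 1 x, eig a 0 y, eig a (1/4) z & v = x + y + z].

Definition V10 (a v : V) : Prop :=
  exists x y, [/\ eig a 1 x, eig a 0 y & v = x + y].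

Definition is_tau (a : V) (t : V -> V) : Prop :=
  [/\ (forall x y, t (x + y) = t x + t y),
      (forall (k : R) x, t (k *: x) = k *: t x),
      (forall x, Vplus a x -> t x = x) &
      (forall x, eig a (1/32) x -> t x = - x)].

(* s is the map sigma(a) on V_+^(a) (values outside V_+^(a) irrelevant):
   linear on V_+^(a), +1 on V_1 (+) V_0, -1 on V_{1/4}. *)
Definition is_sigma_on_Vplus (a : V) (s : V -> V) : Prop :=
  [/\ (forall x y, Vplus a x -> Vplus a y -> s (x + y) = s x + s y),
      (forall (k : R) x, Vplus a x -> s (k *: x) = k *: s x),
      (forall x, V10 a x -> s x = x) &
      (forall x, eig a (1/4) x -> s x = - x)].

(* s is sigma(a) as a linear map of the whole of V (meaningful when
   V = V_+^(a), e.g. when tau(a) = 1). *)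
Definition is_sigma (a : V) (s : V -> V) : Prop :=
  [/\ (forall x y, s (x + y) = s x + s y),
      (forall (k : R) x, s (k *: x) = k *: s x),
      (forall x, V10 a x -> s x = x) &
      (forall x, eig a (1/4) x -> s x = - x)].

Definition M3 (a : V) : Prop := form a a = 1 /\ mul a a = a.

(* V = V_1 (+) V_0 (+) V_{1/4} (+) V_{1/32} (direct sum: existence and
   uniqueness of the decomposition) *)
Definition M4 (a : V) : Prop :=
  forall v, exists x1 x0 x4 x32,
    [/\ eig a 1 x1, eig a 0 x0, eig a (1/4) x4, eig a (1/32) x32 &
        v = x1 + x0 + x4 + x32] /\
        forall y1 y0 y4 y32,
          eig a 1 y1 -> eig a 0 y0 -> eig a (1/4) y4 -> eig a (1/32) y32 ->
          v = y1 + y0 + y4 + y32 ->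
          [/\ y1 = x1, y0 = x0, y4 = x4 & y32 = x32].

Definition M5 (a : V) : Prop := forall v, eig a 1 v -> exists k : R, v = k *: a.

Definition M6 (a : V) : Prop :=
  exists t, is_tau a t /\ forall u v, t (mul u v) = mul (t u) (t v).

Definition M7 (a : V) : Prop :=
  exists s, is_sigma_on_Vplus a s /\
    forall u v, Vplus a u -> Vplus a v -> s (mul u v) = mul (s u) (s v).

Definition axioms_M3_M7 (a : V) : Prop := [/\ M3 a, M4 a, M5 a, M6 a & M7 a].

Definition majorana_axis (a : V) : Prop := a != 0 /\ axioms_M3_M7 a.

Definition generates (A : V -> Prop) : Prop :=
  forall W : V -> Prop,
    W 0 -> (forall x y, W x -> W y -> W (x + y)) ->
    (forall (k : R) x, W x -> W (k *: x)) ->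
    (forall x y, W x -> W y -> W (mul x y)) ->
    (forall a, A a -> W a) -> forall v, W v.

Definition majorana_algebra (A : V -> Prop) : Prop :=
  [/\ form_ok /\ mul_ok, M1, M2, (forall a, A a -> majorana_axis a) & generates A].

End Majorana.

(* Main.v *)
Require Import Defs.
From HB Require Import structures.
From mathcomp Require Import all_boot all_order all_algebra.
From mathcomp Require Import reals.
From mathcomp Require Import ring lra.
Import Order.TTheory GRing.Theory Num.Theory.
Local Open Scope ring_scope.

Theorem mainTheorem1 (R : realType) (V : lmodType R)
    (form : V -> V -> R) (mul : V -> V -> V) (A : V -> Prop)
    (HV : majorana_algebra form mul A)
    (a0 a1 : V) (Ha0 : A a0) (Ha1 : A a1)
    (Htau1 : forall t, is_tau mul a1 t -> forall v, t v = v)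
    (s : V -> V) (Hs : is_sigma mul a1 s)
    (t0 : V -> V) (Ht0 : is_tau mul a0 t0) :
  axioms_M3_M7 form mul (s a0) /\
  (forall t, is_tau mul (s a0) t -> forall v, t (s v) = s (t0 v)).
Proof.
case: HV => [[Hform Hmul] HM1 _ Haxes _].
case: Hform => fD fZ fC _.
case: Hmul => mD mZ mC.
case: Hs => sD sZ s10 s4.
have [_ [_ M4a1 _ M6a1 M7a1]] := Haxes a1 Ha1.
have [_ [M3a0 M4a0 M5a0 M6a0 M7a0]] := Haxes a0 Ha0.
have m0l : forall x, mul 0 x = 0.
  by move=> x; have := mZ 0 0 x; rewrite !scale0r.
have m0r : forall x, mul x 0 = 0 by move=> x; rewrite mC m0l.
have mDr : forall x y z, mul z (x + y) = mul z x + mul z y.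
  by move=> x y z; rewrite mC mD !(mC z).
have mZr : forall (k : R) x z, mul z (k *: x) = k *: mul z x.
  by move=> k x z; rewrite mC mZ mC.
have eig0 : forall a mu, eig mul a mu 0 by move=> a mu; rewrite /eig m0r scaler0.
have s0 : s 0 = 0.
  by have := sD 0 0; rewrite addr0 => /eqP; rewrite -subr_eq subrr eq_sym => /eqP.
have sN : forall x, s (- x) = - s x.
  move=> x; apply/eqP; rewrite -subr_eq0 opprK -sD addNr s0 //.
have fD2 : forall x y z, form z (x + y) = form z x + form z y.
  by move=> x y z; rewrite fC fD !(fC _ z).
have fZ2 : forall (k : R) x z, form z (k *: x) = k * form z x.
  by move=> k x z; rewrite fC fZ fC.
have fN : forall x z, form (- x) z = - form x z.
  by move=> x z; rewrite -scaleN1r fZ mulN1r.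
have fN2 : forall x z, form z (- x) = - form z x.
  by move=> x z; rewrite fC fN fC.
case: M6a1 => t1 [Ht1 _].
have V32 : forall x, eig mul a1 (1/32) x -> x = 0.
  move=> x Hx.
  have E : x = - x by rewrite -{1}(Htau1 t1 Ht1 x); case: Ht1 => _ _ _ ->.
  have E2 : (2:R) *: x = 0 by rewrite scaler_nat mulr2n {2}E subrr.
  by rewrite -(scale1r x) -(@mulVf _ 2) ?pnatr_eq0 // -scalerA E2 scaler0.
have dec1 : forall v, exists x1 x0 x4,
    [/\ eig mul a1 1 x1, eig mul a1 0 x0, eig mul a1 (1/4) x4 & v = x1 + x0 + x4].
  move=> v; have [x1 [x0 [x4 [x32 [[h1 h0 h4 h32 ->] _]]]]] := M4a1 v.
  by exists x1, x0, x4; rewrite (V32 _ h32) addr0.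
have sdec : forall x1 x0 x4, eig mul a1 1 x1 -> eig mul a1 0 x0 ->
    eig mul a1 (1/4) x4 -> s (x1 + x0 + x4) = x1 + x0 - x4.
  move=> x1 x0 x4 h1 h0 h4; rewrite !sD (s4 _ h4) s10; last by exists x1, 0; rewrite addr0.
  by rewrite s10 //; exists 0, x0; rewrite add0r.
have ss : forall v, s (s v) = v.
  move=> v; have [x1 [x0 [x4 [h1 h0 h4 ->]]]] := dec1 v.
  rewrite sdec // sD sN (s4 _ h4) opprK s10 //; exists x1, x0; split=> //.
have Vp1 : forall v, Vplus mul a1 v.
  by move=> v; have [x1 [x0 [x4 [h1 h0 h4 ->]]]] := dec1 v; exists x1, x0, x4.
have smul : forall u v, s (mul u v) = mul (s u) (s v).
  case: M7a1 => s' [[s'D s'Z s'10 s'4] s'mul].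
  have E : forall v, s' v = s v.
    move=> v; have [x1 [x0 [x4 [h1 h0 h4 ->]]]] := dec1 v.
    rewrite sdec // s'D; last by exists 0, 0, x4; rewrite !add0r.
      rewrite s'10; last by exists x1, x0.
      by rewrite s'4.
    by exists x1, x0, 0; rewrite addr0.
  by move=> u v; rewrite -!E s'mul.
have orth : forall a (l m : R) x y, eig mul a l x -> eig mul a m y -> l != m ->
    form x y = 0.
  move=> a l m x y hx hy hlm.
  have := HM1 x a y; rewrite hy (mC x a) hx fZ fZ2 => /eqP.
  rewrite -subr_eq0 -mulrBl mulf_eq0 subr_eq0 eq_sym (negbTE hlm) /= => /eqP //.
have n14 : (1:R) != 1/4 by apply/eqP; lra.
have n04 : (0:R) != 1/4 by apply/eqP; lra.
have iso : forall u v, form (s u) (s v) = form u v.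
  move=> u v.
  have [x1 [x0 [x4 [h1 h0 h4 ->]]]] := dec1 u.
  have [y1 [y0 [y4 [g1 g0 g4 ->]]]] := dec1 v.
  rewrite !sdec //.
  have o1 : form (x1 + x0) y4 = 0.
    by rewrite fD (orth _ _ _ _ _ h1 g4) ?(orth _ _ _ _ _ h0 g4) ?addr0.
  have o2 : form x4 (y1 + y0) = 0.
    rewrite fD2 (fC x4 y1) (fC x4 y0).
    by rewrite (orth _ _ _ _ _ g1 h4) ?(orth _ _ _ _ _ g0 h4) ?addr0.
  move: o1 o2; rewrite !fD !fD2 ?fN ?fN2 ?fD ?fD2 => o1 o2.
  lra.
set b := s a0.
have eigS : forall mu w, eig mul a0 mu (s w) <-> eig mul b mu w.
  move=> mu w; rewrite /eig; split=> h.
    by rewrite -{1}(ss w) -smul h sZ ss.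
  by rewrite -(ss (mul a0 (s w))) smul ss -/b h sZ.
have eigS' : forall mu v, eig mul a0 mu v -> eig mul b mu (s v).
  by move=> mu v h; apply/eigS; rewrite ss.
have VpS : forall x, Vplus mul b x -> Vplus mul a0 (s x).
  move=> x [y1 [y0 [y4 [h1 h0 h4 ->]]]].
  by exists (s y1), (s y0), (s y4); rewrite !sD; split=> //; apply/eigS.
have V10S : forall x, V10 mul b x -> V10 mul a0 (s x).
  move=> x [y1 [y0 [h1 h0 ->]]].
  by exists (s y1), (s y0); rewrite !sD; split=> //; apply/eigS.
have tauS : forall t, is_tau mul a0 t -> is_tau mul b (fun x => s (t (s x))).
  move=> t [tD tZ tP t32]; split.
  - by move=> x y; rewrite sD tD sD.
  - by move=> k x; rewrite sZ tZ sZ.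
  - by move=> x /VpS h; rewrite tP // ss.
  - by move=> x /eigS h; rewrite t32 // sN ss.
have M4b : M4 mul b.
  move=> v; have [x1 [x0 [x4 [x32 [[h1 h0 h4 h32 E] U]]]]] := M4a0 (s v).
  exists (s x1), (s x0), (s x4), (s x32); split.
    by split; try (apply: eigS'; done); rewrite -!sD -E ss.
  move=> y1 y0 y4 y32 g1 g0 g4 g32 Ev.
  have := U (s y1) (s y0) (s y4) (s y32).
  case; try by apply/eigS.
    by rewrite Ev !sD.
  by move=> <- <- <- <-; rewrite !ss.
have tau_uniq : forall t t', is_tau mul b t -> is_tau mul b t' -> forall v, t v = t' v.
  move=> t t' [tD _ tP t32] [t'D _ t'P t'32] v.
  have [x1 [x0 [x4 [x32 [[h1 h0 h4 h32 ->] _]]]]] := M4b v.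
  have Hp : Vplus mul b (x1 + x0 + x4) by exists x1, x0, x4.
  by rewrite tD t'D tP // t'P // t32 // t'32.
split; last first.
  move=> t Ht v.
  by rewrite (tau_uniq _ _ Ht (tauS _ Ht0)) ss.
split=> //.
- by split; [rewrite iso; case: M3a0 | rewrite -smul; case: M3a0 => _ ->].
- move=> v /eigS /M5a0 [k hk]; exists k.
  by rewrite -(ss v) hk sZ.
- case: M6a0 => t [Ht tmul]; exists (fun x => s (t (s x))); split; first exact: tauS.
  by move=> u v; rewrite smul tmul smul.
- case: M7a0 => sg [[gD gZ g10 g4] gmul]; exists (fun x => s (sg (s x))); split.
    split.
    - by move=> x y /VpS hx /VpS hy; rewrite sD gD // sD.
    - by move=> k x /VpS hx; rewrite sZ gZ // sZ.
    - by move=> x /V10S h; rewrite g10 // ss.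
    - by move=> x /eigS h; rewrite g4 // sN ss.
  by move=> u v /VpS hu /VpS hv; rewrite smul gmul // smul.
Qed.
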